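(* For $m=7$ and for every integer $m\ge 10$ we have $\ell_m<(m-\ell_m)(m-\ell_m+1)$.
   Context: For integers $m\ge2$ and real $\ell\in(0,m]$, $f_m(\ell)=\frac1{\ell}\left(\binom{\ell}{2}+\binom{m-\ell+1}{2}\right)=\ell+\frac{m^2+m}{2\ell}-m-1$. Let $\lambda_m=\frac{\sqrt{2m^2+2m}}{2}$, and let $\ell_m\in\{\lfloor\lambda_m\rfloor,\lceil\lambda_m\rceil\}$ be such that $f_m(\ell_m)=\min\{f_m(\lfloor\lambda_m\rfloor),f_m(\lceil\lambda_m\rceil)\}$, with the convention that if $\lfloor\lambda_m\rfloor\ne\lceil\lambda_m\rceil$ and $f_m(\lfloor\lambda_m\rfloor)=f_m(\lceil\lambda_m\rceil)$, then $\ell_m=\lfloor\lambda_m\rfloor$. *)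

(* Defs.v *)
From Stdlib Require Import Reals ZArith Lra Lia.
Open Scope R_scope.

Definition Rfloor (x : R) : Z := Int_part x.
Definition Rceil (x : R) : Z := (- Int_part (- x))%Z.

Definition binom2 (x : R) : R := x * (x - 1) / 2.

Definition f (m : nat) (l : R) : R :=
  / l * (binom2 l + binom2 (INR m - l + 1)).

Definition lambda (m : nat) : R :=
  sqrt (2 * INR m ^ 2 + 2 * INR m) / 2.

Definition ell (m : nat) : Z :=
  let a := Rfloor (lambda m) in
  let b := Rceil (lambda m) in
  if Rle_dec (f m (IZR a)) (f m (IZR b)) then a else b.

(* Main.v *)
Require Import Defs.
From Stdlib Require Import Reals ZArith Lra Lia Psatz.
Open Scope R_scope.

Lemma floor_lt (x : R) : IZR (Rfloor x) <= x.
Proof. unfold Rfloor. destruct (base_Int_part x); lra. Qed.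

Lemma ceil_lt (x : R) : IZR (Rceil x) - 1 < x.
Proof. unfold Rceil. rewrite opp_IZR. destruct (base_Int_part (- x)); lra. Qed.

Lemma ell_bound m : IZR (ell m) - 1 < lambda m.
Proof.
  unfold ell. destruct Rle_dec.
  - pose proof (floor_lt (lambda m)); lra.
  - apply ceil_lt.
Qed.

Lemma lambda_sq m : lambda m * lambda m = (INR m * INR m + INR m) / 2.
Proof.
  unfold lambda. assert (0 <= 2 * INR m ^ 2 + 2 * INR m) by (pose proof (pos_INR m); nra).
  pose proof (sqrt_sqrt _ H). nra.
Qed.

Lemma lambda_ge0 m : 0 <= lambda m.
Proof. unfold lambda. pose proof (sqrt_pos (2 * INR m ^ 2 + 2 * INR m)). lra. Qed.

Lemma int_part_eq (x : R) (z : Z) : IZR z <= x < IZR z + 1 -> Int_part x = z.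
Proof.
  intros [H1 H2]. unfold Int_part.
  assert (z + 1 = up x)%Z.
  { apply tech_up; rewrite plus_IZR; lra. }
  lia.
Qed.

Lemma sqrt_between (a s b : R) : 0 <= a -> a * a < s -> s < b * b -> 0 <= b -> a < sqrt s < b.
Proof.
  intros. split.
  - rewrite <- (sqrt_square a) by lra. apply sqrt_lt_1; nra.
  - rewrite <- (sqrt_square b) by lra. apply sqrt_lt_1; nra.
Qed.

Lemma ell_small (m : nat) (k : Z) :
  IZR k < lambda m < IZR k + 1 ->
  Defs.f m (IZR k) <= Defs.f m (IZR k + 1) -> ell m = k.
Proof.
  intros [H1 H2] Hf. unfold ell.
  assert (Rfloor (lambda m) = k) by (apply int_part_eq; lra).
  assert (Rceil (lambda m) = (k+1)%Z).
  { unfold Rceil. rewrite (int_part_eq (- lambda m) (- (k+1))). lia.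
    rewrite opp_IZR, plus_IZR. lra. }
  rewrite H, H0, plus_IZR. destruct Rle_dec; [reflexivity| contradiction].
Qed.

Theorem proposition1p3 (m : nat) :
  (m = 7 \/ 10 <= m)%nat ->
  (ell m < (Z.of_nat m - ell m) * (Z.of_nat m - ell m + 1))%Z.
Proof.
  intros Hm.
  assert (Hs : (m = 7 \/ m = 10 \/ m = 11 \/ 12 <= m)%nat) by lia.
  destruct Hs as [-> | [-> | [-> | Hm12]]].
  - rewrite (ell_small 7 5). lia.
    + unfold lambda. simpl INR.
      pose proof (sqrt_between 10 (2 * (1+1+1+1+1+1+1) ^ 2 + 2 * (1+1+1+1+1+1+1)) 11).
      lra.
    + unfold Defs.f, binom2. simpl INR. simpl IZR. lra.
  - rewrite (ell_small 10 7). lia.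
    + unfold lambda. simpl INR.
      pose proof (sqrt_between 14 (2 * (1+1+1+1+1+1+1+1+1+1) ^ 2 + 2 * (1+1+1+1+1+1+1+1+1+1)) 16).
      lra.
    + unfold Defs.f, binom2. simpl INR. simpl IZR. lra.
  - rewrite (ell_small 11 8). lia.
    + unfold lambda. simpl INR.
      pose proof (sqrt_between 16 (2 * (1+1+1+1+1+1+1+1+1+1+1) ^ 2 + 2 * (1+1+1+1+1+1+1+1+1+1+1)) 18).
      lra.
    + unfold Defs.f, binom2. simpl INR. simpl IZR. lra.
  - set (z := ell m). set (M := Z.of_nat m).
    assert (HM : (12 <= M)%Z) by lia.
    assert (Hb : (z <= 1 \/ 2 * (z-1) * (z-1) < M * M + M)%Z).
    { destruct (Z_le_gt_dec z 1) as [h|h]; [left; exact h | right].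
      apply lt_IZR. rewrite !plus_IZR, !mult_IZR, minus_IZR.
      unfold M. rewrite <- INR_IZR_INZ.
      pose proof (ell_bound m). pose proof (lambda_sq m). pose proof (lambda_ge0 m).
      fold z in H. apply Z.gt_lt in h. apply IZR_lt in h.
      assert (0 < IZR z - 1) by lra. nra. }
    destruct Hb as [Hb|Hb]. nia.
    destruct (Z_le_gt_dec 3 (M - z)) as [Hk|Hk].
    + set (k := (M - z)%Z) in *.
      assert (M = z + k)%Z by lia. rewrite H in Hb.
      destruct (Z_lt_le_dec z (k * (k+1))) as [h|h]; [lia|].
      exfalso. nia.
    + nia.
Qed.
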